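(* There exists a $(418,18)$-arc in $\operatorname{PG}(2,25)$; hence $m_{18}(2,25)\ge 418$.
   Context: Points of $\operatorname{PG}(2,q)$ are the 1-dimensional subspaces of $\operatorname{GF}(q)^3$, lines are the 2-dimensional subspaces. An $(n,r)$-arc in $\operatorname{PG}(2,q)$ is a set $\mathcal B$ of $n$ points such that every line contains at most $r$ points of $\mathcal B$ and at least one line contains exactly $r$ points of $\mathcal B$. $m_r(2,q)$ is the maximum $n$ for which an $(n,r)$-arc in $\operatorname{PG}(2,q)$ exists. *)

(* Defs.v *)
(* A subspace of F^3 is represented canonically by a square matrix X with
   <<X>>%MS = X (mxalgebra's canonical row-space representative); its
   dimension is \rank X. *)
From HB Require Import structures.
From mathcomp Require Import all_boot all_order all_algebra all_field.
Set Implicit Arguments. Unset Strict Implicit. Unset Printing Implicit Defensive.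
Import GRing.Theory.

Section PG2.
Variable F : finFieldType.

Definition is_subspace (X : 'M[F]_3) : bool := (<<X>>%MS == X).
Definition is_point (X : 'M[F]_3) : bool := is_subspace X && (\rank X == 1)%N.
Definition is_line (X : 'M[F]_3) : bool := is_subspace X && (\rank X == 2)%N.

Definition on_line (B : {set 'M[F]_3}) (L : 'M[F]_3) : nat :=
  #|[set P in B | (P <= L)%MS]|.

Definition is_arc (n r : nat) (B : {set 'M[F]_3}) : bool :=
  [&& [forall P in B, is_point P], #|B| == n,
      [forall L, is_line L ==> (on_line B L <= r)%N] &
      [exists L, is_line L && (on_line B L == r)]].

(* m_r(2,q): the maximum size of an (n,r)-arc (0 if none exists) *)
Definition m_r (r : nat) : nat :=
  \max_(B : {set 'M[F]_3} | is_arc #|B| r B) #|B|.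

End PG2.

(* Main.v *)
Require Import Defs.
From mathcomp Require Import all_boot all_order all_algebra all_field.
Set Warnings "-notation-overridden,-ambiguous-paths".
From mathcomp Require Import all_boot all_order all_algebra all_field ring zify.
Set Implicit Arguments. Unset Strict Implicit. Unset Printing Implicit Defensive.
Import GRing.Theory.
Lemma nat_key X Y : (5 %| X^2 + 3 * Y^2)%N -> (5 %| X)%N && (5 %| Y)%N.
Proof.
rewrite /dvdn -modnDm -modnMmr -(modnXm 2 5 X) -(modnXm 2 5 Y).
have : (X %% 5 < 5)%N by rewrite ltn_mod.
have : (Y %% 5 < 5)%N by rewrite ltn_mod.
move: (X %% 5) (Y %% 5) => a b.
by do 5?[case: a => [|a]] => //; do 5?[case: b => [|b]].
Qed.
Local Open Scope ring_scope.




Definition cpt := (nat * nat * nat)%type.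
Definition co (u : cpt) (k : nat) : nat :=
  match k with 0 => u.1.1 | 1 => u.1.2 | _ => u.2 end.
Definition cm (e1 e2 : nat) : nat * nat :=
  (e1 %% 5 * (e2 %% 5) + 2 * (e1 %/ 5 * (e2 %/ 5)),
   e1 %% 5 * (e2 %/ 5) + e1 %/ 5 * (e2 %% 5))%N.
Definition cdot (u v : cpt) : nat * nat :=
  let p0 := cm (co u 0) (co v 0) in
  let p1 := cm (co u 1) (co v 1) in
  let p2 := cm (co u 2) (co v 2) in
  (p0.1 + p1.1 + p2.1, p0.2 + p1.2 + p2.2)%N.
Definition ztest (u v : cpt) : bool :=
  let p := cdot u v in ((p.1 %% 5 == 0) && (p.2 %% 5 == 0))%N.
Definition cnorm (u : cpt) : bool :=
  [|| [&& co u 0 == 1, co u 1 < 25 & co u 2 < 25],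
      [&& co u 0 == 0, co u 1 == 1 & co u 2 < 25] |
      [&& co u 0 == 0, co u 1 == 0 & co u 2 == 1]]%N.
Definition lbound (s : seq cpt) (r : nat) (c : cpt) : bool := (count (ztest^~ c) s <= r)%N.
Definition allbound (s : seq cpt) (r : nat) : bool :=
  [&& all (fun x => all (fun y => lbound s r (1, x, y)) (iota 0 25)) (iota 0 25),
      all (fun y => lbound s r (0, 1, y)) (iota 0 25) & lbound s r (0, 0, 1)]%N.

Section Field.
Variable F : finFieldType.
Hypothesis hF : #|F| = 25%N.

Lemma char5 : (5%N \in [pchar F])%N.
Proof. exact: (@card_finPcharP _ 5 2 hF). Qed.

Lemma nat5 n : (n%:R == 0 :> F) = (5 %| n)%N.
Proof. by rewrite (dvdn_pcharf char5). Qed.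

Lemma natr_mod5 n : (n %% 5)%:R = n%:R :> F.
Proof.
rewrite {2}(divn_eq n 5) natrD natrM.
have h5 : 5%:R = 0 :> F by apply/eqP; rewrite nat5.
by rewrite h5 mulr0 add0r.
Qed.

Lemma exists_z : exists z : F, z ^+ 5 != z.
Proof.
have [z Hz|H] := pickP (fun z : F => z ^+ 5 != z); first by exists z.
have p0 : ('X^5 - 'X : {poly F}) != 0.
  by rewrite -size_poly_eq0 size_polyDl ?size_polyXn // size_polyN size_polyX.
have hall : all (root ('X^5 - 'X)) (enum F).
  apply/allP => x _.
  by rewrite /root !hornerE; have := H x => /negbFE; rewrite subr_eq0.
have := max_poly_roots p0 hall (enum_uniq F).
by rewrite size_polyDl ?size_polyXn ?size_polyN ?size_polyX // -cardE hF.
Qed.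

Lemma frobB (a b : F) : (a - b) ^+ 5 = a ^+ 5 - b ^+ 5.
Proof. by rewrite -!(pFrobenius_autE char5) rmorphB. Qed.

Lemma exists_w : exists w : F, w ^+ 2 = 2%:R.
Proof.
have [z Hz] := exists_z.
set t := z ^+ 5 - z.
have t0 : t != 0 by rewrite subr_eq0.
have t5 : t ^+ 5 = - t.
  rewrite frobB -exprM (_ : (5 * 5 = #|F|)%N) ?expf_card; last by rewrite hF.
  by rewrite /t opprB.
have t4 : t ^+ 4 = -1.
  apply: (mulfI t0); rewrite -exprS t5; by rewrite mulrN1.
have h5 : 5%:R = 0 :> F by apply/eqP; rewrite nat5.
have : (t ^+ 2 - 2%:R) * (t ^+ 2 - 3%:R) = 0.
  have -> : (t ^+ 2 - 2%:R) * (t ^+ 2 - 3%:R) = t ^+ 4 + 1 - 5%:R * t ^+ 2 + 5%:R.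
    ring.
  by rewrite t4 h5 mul0r subr0 addr0 addNr.
move/eqP; rewrite mulf_eq0 !subr_eq0 => /orP [/eqP h|/eqP h].
  by exists t.
exists (2%:R * t); by rewrite exprMn h -natrX -natrM -[LHS]natr_mod5.
Qed.

Variable w : F.
Hypothesis hw : w ^+ 2 = 2%:R.

Definition phi (a b : nat) : F := a%:R + b%:R * w.

Lemma h5 : 5%:R = 0 :> F.
Proof. by apply/eqP; rewrite nat5. Qed.

Lemma phiD a b c d : phi a b + phi c d = phi (a + c) (b + d).
Proof. rewrite /phi !natrD; ring. Qed.

Lemma phiM a b c d : phi a b * phi c d = phi (a * c + 2 * (b * d)) (a * d + b * c).
Proof.
apply/eqP; rewrite -subr_eq0 /phi.
have -> : (a%:R + b%:R * w) * (c%:R + d%:R * w) -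
  ((a * c + 2 * (b * d))%:R + (a * d + b * c)%:R * w) =
  (b%:R * d%:R) * (w ^+ 2 - 2%:R) :> F by ring.
by rewrite hw subrr mulr0.
Qed.

Lemma phi0 X Y : phi X Y = 0 -> (5 %| X)%N && (5 %| Y)%N.
Proof.
move=> h; apply: nat_key; rewrite -nat5 natrD natrM !natrX.
have hX : X%:R = - (Y%:R * w) :> F by apply/eqP; rewrite -subr_eq0 opprK; apply/eqP.
rewrite hX sqrrN exprMn hw.
have -> : (3%:R : F) = 5%:R - 2%:R by rewrite -natrB.
by rewrite h5; apply/eqP; ring.
Qed.

Lemma phi_eq0 X Y : (phi X Y == 0) = ((X %% 5 == 0)%N && (Y %% 5 == 0)%N).
Proof.
apply/idP/idP; first by move/eqP/phi0.
case/andP => /eqP hx /eqP hy.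
by rewrite /phi -(natr_mod5 X) -(natr_mod5 Y) hx hy mul0r addr0.
Qed.

Definition phic (e : nat) : F := phi (e %% 5) (e %/ 5).
Definition rowv (u : cpt) : 'rV[F]_3 := \row_(k < 3) phic (co u k).
Definition colv (u : cpt) : 'cV[F]_3 := \col_(k < 3) phic (co u k).

Lemma phic0 : phic 0 = 0.
Proof. by rewrite /phic /phi /= mul0r addr0. Qed.
Lemma phic1 : phic 1 = 1.
Proof. by rewrite /phic /phi /= mul0r addr0. Qed.

Lemma phicM e1 e2 : phic e1 * phic e2 = phi (cm e1 e2).1 (cm e1 e2).2.
Proof. by rewrite /phic phiM. Qed.

Lemma dotE u v : (rowv u *m colv v) 0 0 = phi (cdot u v).1 (cdot u v).2.
Proof.
rewrite !mxE !big_ord_recl big_ord0 addr0 !mxE /=.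
by rewrite !phicM addrA !phiD.
Qed.

Lemma ztestE u v : (rowv u *m colv v == 0) = ztest u v.
Proof.
rewrite /ztest -phi_eq0 -dotE.
apply/eqP/eqP => [->|h]; first by rewrite mxE.
by apply/matrixP => i j; rewrite !ord1 h mxE.
Qed.

Lemma phiB a b c d : phi a b - phi c d = phi (a + 4 * c) (b + 4 * d).
Proof.
apply/eqP; rewrite -subr_eq0.
have -> : phi a b - phi c d - phi (a + 4 * c) (b + 4 * d) = - (5%:R * phi c d).
  rewrite /phi; ring.
by rewrite h5 mul0r oppr0.
Qed.

Lemma phic_inj e1 e2 : (e1 < 25)%N -> (e2 < 25)%N -> phic e1 = phic e2 -> e1 = e2.
Proof.
move=> h1 h2 /eqP; rewrite -subr_eq0 /phic phiB phi_eq0 => /andP [ha hb].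
lia.
Qed.

Lemma phic_surj (f : F) : exists2 e, (e < 25)%N & phic e = f.
Proof.
pose g (i : 'I_25) := phic i.
have ginj : injective g by move=> i j /phic_inj h; apply/val_inj/h.
have hc : (#|F| <= #|'I_25|)%N by rewrite card_ord hF.
have := inj_card_onto ginj hc f.
by case/codomP => i ->; exists i.
Qed.

Lemma mulDiv (a b : F) : a != 0 -> a * (b / a) = b.
Proof. by move=> h; rewrite mulrC divfK. Qed.

Lemma ord3P (P : 'I_3 -> Prop) : P 0 -> P 1 -> P 2 -> forall i, P i.
Proof.
move=> p0 p1 p2 [[|[|[|//]]] hi].
- by rewrite (_ : Ordinal hi = 0) //; apply/val_inj.
- by rewrite (_ : Ordinal hi = 1) //; apply/val_inj.
- by rewrite (_ : Ordinal hi = 2) //; apply/val_inj.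
Qed.

Lemma col_decomp (c : 'cV[F]_3) : c != 0 ->
  exists lam : F, exists c' : cpt, [/\ lam != 0, c = lam *: colv c' &
   [|| [&& co c' 0 == 1, co c' 1 < 25 & co c' 2 < 25],
      [&& co c' 0 == 0, co c' 1 == 1 & co c' 2 < 25] |
      [&& co c' 0 == 0, co c' 1 == 0 & co c' 2 == 1]]%N].
Proof.
move=> c0.
have E : forall c'' : cpt, forall lam, c = lam *: colv c'' <->
   [/\ c 0 0 = lam * phic (co c'' 0), c 1 0 = lam * phic (co c'' 1)
     & c 2 0 = lam * phic (co c'' 2)].
  move=> c'' lam; split=> [->|[e0 e1 e2]]; first by rewrite !mxE.
  apply/matrixP => i j; rewrite ord1 !mxE.
  by elim/ord3P: i.
have [a0|a0] := eqVneq (c 0 0) 0; last first.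
  have [x hx ex] := phic_surj (c 1 0 / c 0 0).
  have [y hy ey] := phic_surj (c 2 0 / c 0 0).
  exists (c 0 0), (1, x, y)%N; split; [done| |by rewrite /= hx hy].
  by apply/E; rewrite /= phic1 mulr1 ex ey !mulDiv.
have [a1|a1] := eqVneq (c 1 0) 0; last first.
  have [y hy ey] := phic_surj (c 2 0 / c 1 0).
  exists (c 1 0), (0, 1, y)%N; split; [done| |by rewrite /= hy].
  by apply/E; rewrite /= phic1 phic0 mulr1 mulr0 ey a0 mulDiv.
have [a2|a2] := eqVneq (c 2 0) 0.
  case/negP: c0; apply/eqP/matrixP => i j; rewrite ord1 mxE.
  by elim/ord3P: i.
exists (c 2 0), (0, 0, 1)%N; split; [done| |by []].
by apply/E; rewrite /= phic1 phic0 !mulr1 !mulr0 a0 a1.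
Qed.

Lemma rowv_coord u k : (rowv u) 0 k = phic (co u k).
Proof. by rewrite mxE. Qed.

Lemma cnorm_neq0 u : cnorm u -> rowv u != 0.
Proof.
have H (k : 'I_3) : co u k = 1%N -> rowv u != 0.
  move=> h; apply/negP => /eqP h0.
  have := rowv_coord u k; rewrite h0 h phic1 mxE => /esym/eqP; by rewrite oner_eq0.
case/or3P=> [/and3P[/eqP p _ _]|/and3P[_ /eqP p _]|/and3P[_ _ /eqP p]].
- exact: (H 0).
- exact: (H 1).
- exact: (H 2).
Qed.

Lemma rowv_inj u v : cnorm u -> cnorm v -> (rowv u <= rowv v)%MS -> u = v.
Proof.
move=> nu nv /sub_rVP [a ha].
have e (k : 'I_3) : phic (co u k) = a * phic (co v k).
  by rewrite -(rowv_coord u k) ha mxE rowv_coord.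
have e0 := e 0; have e1 := e 1; have e2 := e 2; clear e ha.
case: u nu e0 e1 e2 => [[u0 u1] u2]; case: v nv => [[v0 v1] v2] /=.
move=> nv nu e0 e1 e2.
rewrite /cnorm /= in nu nv.
have fin (x y : nat) : (x < 25)%N -> (y < 25)%N -> phic x = phic y -> x = y by apply: phic_inj.
have one0 : (1 : F) != 0 by rewrite oner_eq0.
case/or3P: nu => [/and3P[/eqP p0 q1 q2]|/and3P[/eqP p0 /eqP p1 q2]|/and3P[/eqP p0 /eqP p1 /eqP p2]];
case/or3P: nv => [/and3P[/eqP r0 s1 s2]|/and3P[/eqP r0 /eqP r1 s2]|/and3P[/eqP r0 /eqP r1 /eqP r2]];
subst; rewrite ?phic0 ?phic1 ?mulr1 ?mulr0 in e0 e1 e2;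
try (by move/eqP: e0; rewrite eq_sym ?oner_eq0);
try (by move/eqP: e1; rewrite eq_sym ?oner_eq0);
try (by move/eqP: e2; rewrite eq_sym ?oner_eq0);
try (rewrite -e0 ?mul0r ?mul1r in e1 e2);
try (rewrite -e1 ?mul0r ?mul1r in e2);
try (by move/eqP: e0; rewrite ?oner_eq0);
try (by move/eqP: e1; rewrite ?oner_eq0);
try (by move/eqP: e2; rewrite ?oner_eq0).
all: try (by rewrite (fin _ _ q1 s1 e1) (fin _ _ q2 s2 e2)).
all: try (by rewrite (fin _ _ q2 s2 e2)).
Qed.

Lemma colvE u : colv u = (rowv u)^T.
Proof. by apply/matrixP => i j; rewrite !mxE. Qed.

Lemma rank_rowv u : cnorm u -> \rank (rowv u) = 1%N.
Proof.
move=> nu; apply/eqP; rewrite eqn_leq rank_leq_row lt0n mxrank_eq0.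
exact: cnorm_neq0.
Qed.

Lemma allbound_at (s : seq cpt) r c : allbound s r -> cnorm c -> lbound s r c.
Proof.
case/and3P => [/allP h1 /allP h2 h3].
case: c => [[a b] c]; rewrite /cnorm /=.
case/or3P => [/and3P[/eqP -> hb hc]|/and3P[/eqP -> /eqP -> hc]|/and3P[/eqP -> /eqP -> /eqP ->]] //.
- move: (h1 b); rewrite mem_iota add0n => /(_ hb) /allP; apply.
  by rewrite mem_iota add0n.
- by apply: h2; rewrite mem_iota add0n.
Qed.

Lemma card_nth_set (s : seq cpt) (p : pred cpt) :
  #|[set i : 'I_(size s) | p (nth (0, 0, 0)%N s i)]| = count p s.
Proof.
rewrite cardsE cardE -deprecated_filter_index_enum size_filter.
rewrite /index_enum unlock -enumT.
rewrite -[in RHS](mkseq_nth (0, 0, 0)%N s) /mkseq count_map.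
rewrite -val_enum_ord count_map count_map enumT; apply: eq_count => i.
by [].
Qed.

Section Arc.
Variables (s : seq cpt) (r : nat) (c0 : cpt).
Hypothesis hnorm : all cnorm s.
Hypothesis huniq : uniq s.
Hypothesis hbound : allbound s r.
Hypothesis hc0 : cnorm c0.
Hypothesis hex : count (ztest^~ c0) s = r.

Definition pt (i : 'I_(size s)) : 'M[F]_3 := <<rowv (nth (0, 0, 0)%N s i)>>%MS.
Definition Barc : {set 'M[F]_3} := [set pt i | i in [set: 'I_(size s)]].

Lemma nthn (i : 'I_(size s)) : cnorm (nth (0, 0, 0)%N s i).
Proof. by apply/(allP hnorm)/mem_nth. Qed.

Lemma pt_inj : injective pt.
Proof.
move=> i j h.
have : (<<rowv (nth (0, 0, 0)%N s i)>> <= <<rowv (nth (0, 0, 0)%N s j)>>)%MS by rewrite -/(pt i) h.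
rewrite !genmxE => /(rowv_inj (nthn i) (nthn j)) /eqP.
by rewrite nth_uniq // => /eqP; apply: val_inj.
Qed.

Lemma card_B : #|Barc| = size s.
Proof. by rewrite card_imset ?cardsT ?card_ord //; exact: pt_inj. Qed.

Lemma pt_point i : is_point (pt i).
Proof.
by rewrite /is_point /is_subspace /pt genmx_id eqxx /= genmxE rank_rowv // nthn.
Qed.

Lemma on_line_pt L : on_line Barc L = #|[set i : 'I_(size s) | (rowv (nth (0, 0, 0)%N s i) <= L)%MS]|.
Proof.
rewrite /on_line -(card_imset _ pt_inj); apply: eq_card => P.
rewrite !inE; apply/andP/imsetP.
  by case=> /imsetP [i _ ->] h; exists i => //; rewrite inE -genmxE.
case=> i; rewrite inE => h ->; split; first by apply: imset_f; rewrite inE.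
by rewrite /pt genmxE.
Qed.

Lemma line_bound L : is_line L -> (on_line Barc L <= r)%N.
Proof.
case/andP => _ /eqP rL.
set C := cokermx L.
have rC : \rank C = 1%N by rewrite mxrank_coker rL.
have [j cj|H] := pickP (fun j : 'I_3 => col j C != 0); last first.
  suff C0 : C = 0 by move: rC; rewrite C0 mxrank0.
  apply/matrixP => a b; move: (H b) => /= /negbFE /eqP /matrixP /(_ a 0).
  by rewrite !mxE.
have [lam [c' [l0 ec nc']]] := col_decomp cj.
rewrite on_line_pt.
apply: (leq_trans _ (allbound_at hbound nc')).
rewrite /lbound -card_nth_set; apply: subset_leq_card; apply/subsetP => i.
rewrite !inE submxE => /eqP h.
have : rowv (nth (0, 0, 0)%N s i) *m col j C = 0 by rewrite colE mulmxA h mul0mx.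
rewrite ec -scalemxAr => /eqP; rewrite scaler_eq0 (negbTE l0) /=.
by rewrite ztestE.
Qed.

Definition L0 : 'M[F]_3 := <<kermx (colv c0)>>%MS.

Lemma L0_line : is_line L0.
Proof.
rewrite /is_line /is_subspace /L0 genmx_id eqxx /= genmxE mxrank_ker.
by rewrite colvE mxrank_tr rank_rowv.
Qed.

Lemma L0_count : on_line Barc L0 = r.
Proof.
rewrite on_line_pt -hex -card_nth_set; apply: eq_card => i.
by rewrite !inE /L0 genmxE sub_kermx ztestE.
Qed.

Lemma arc_ok : is_arc (size s) r Barc.
Proof.
apply/and4P; split.
- by apply/forall_inP => P /imsetP [i _ ->]; exact: pt_point.
- by rewrite card_B.
- by apply/forallP => L; apply/implyP; exact: line_bound.
- by apply/existsP; exists L0; rewrite L0_line L0_count eqxx.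
Qed.
End Arc.
End Field.

Definition arc : seq cpt := [:: (1,0,1); (1,0,3); (1,0,5); (1,0,7); (1,0,8); (1,0,10); (1,0,11); (1,0,12); (1,0,14); (1,0,15); (1,0,16); (1,0,19); (1,0,20); (1,0,22); (1,0,23); (1,0,24); (1,1,1); (1,1,4); (1,1,6); (1,1,8); (1,1,9); (1,1,10); (1,1,11); (1,1,12); (1,1,13); (1,1,15); (1,1,16); (1,1,17); (1,1,20); (1,1,21); (1,1,23); (1,1,24); (1,2,3); (1,2,6); (1,2,7); (1,2,8); (1,2,9); (1,2,10); (1,2,11); (1,2,13); (1,2,14); (1,2,15); (1,2,16); (1,2,18); (1,2,19); (1,2,21); (1,2,22); (1,2,23); (1,2,24); (1,3,2); (1,3,4); (1,3,6); (1,3,7); (1,3,8); (1,3,9); (1,3,10); (1,3,13); (1,3,14); (1,3,15); (1,3,16); (1,3,18); (1,3,19); (1,3,21); (1,3,22); (1,3,24); (1,4,2); (1,4,4); (1,4,5); (1,4,6); (1,4,8); (1,4,9); (1,4,10); (1,4,11); (1,4,12); (1,4,15); (1,4,16); (1,4,17); (1,4,18); (1,4,21); (1,4,23); (1,4,24); (1,5,1); (1,5,5); (1,5,7); (1,5,9); (1,5,11); (1,5,12); (1,5,13); (1,5,16); (1,5,17); (1,5,18); (1,5,20); (1,5,21); (1,5,22); (1,5,24); (1,6,2); (1,6,3); (1,6,4); (1,6,5); (1,6,6); (1,6,7); (1,6,8); (1,6,11); (1,6,13); (1,6,14); (1,6,15); (1,6,16); (1,6,18); (1,6,20); (1,6,22);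 (1,6,23); (1,6,24); (1,7,1); (1,7,3); (1,7,4); (1,7,5); (1,7,6); (1,7,7); (1,7,10); (1,7,11); (1,7,12); (1,7,16); (1,7,18); (1,7,19); (1,7,22); (1,8,1); (1,8,3); (1,8,4); (1,8,6); (1,8,7); (1,8,9); (1,8,10); (1,8,11); (1,8,13); (1,8,14); (1,8,15); (1,8,16); (1,8,17); (1,8,20); (1,8,21); (1,8,22); (1,8,23); (1,9,2); (1,9,3); (1,9,4); (1,9,7); (1,9,8); (1,9,9); (1,9,10); (1,9,11); (1,9,13); (1,9,17); (1,9,20); (1,9,21); (1,9,22); (1,9,23); (1,10,2); (1,10,3); (1,10,5); (1,10,6); (1,10,8); (1,10,11); (1,10,12); (1,10,13); (1,10,14); (1,10,16); (1,10,17); (1,10,18); (1,10,19); (1,10,20); (1,10,21); (1,10,23); (1,10,24); (1,11,1); (1,11,2); (1,11,4); (1,11,5); (1,11,8); (1,11,9); (1,11,10); (1,11,12); (1,11,13); (1,11,14); (1,11,15); (1,11,16); (1,11,17); (1,11,19); (1,11,20); (1,11,21); (1,11,24); (1,12,1); (1,12,2); (1,12,3); (1,12,6); (1,12,7); (1,12,8); (1,12,10); (1,12,12); (1,12,13); (1,12,14); (1,12,16); (1,12,18); (1,12,19); (1,12,20); (1,12,22); (1,12,23); (1,12,24); (1,13,1); (1,13,2); (1,13,3); (1,13,5); (1,13,7); (1,13,9); (1,13,12); (1,13,13); (1,13,14); (1,13,15); (1,13,17); (1,13,18); (1,13,19); (1,13,20); (1,13,21); (1,13,22); (1,13,23); (1,14,1);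 (1,14,2); (1,14,4); (1,14,8); (1,14,9); (1,14,10); (1,14,11); (1,14,12); (1,14,14); (1,14,15); (1,14,17); (1,14,18); (1,14,19); (1,14,20); (1,14,22); (1,14,23); (1,14,24); (1,15,1); (1,15,5); (1,15,6); (1,15,7); (1,15,8); (1,15,9); (1,15,10); (1,15,11); (1,15,12); (1,15,13); (1,15,14); (1,15,15); (1,15,17); (1,15,18); (1,15,19); (1,15,20); (1,15,21); (1,15,23); (1,16,1); (1,16,2); (1,16,3); (1,16,4); (1,16,6); (1,16,10); (1,16,11); (1,16,12); (1,16,14); (1,16,15); (1,16,17); (1,16,18); (1,16,19); (1,16,20); (1,16,21); (1,16,23); (1,16,24); (1,17,1); (1,17,2); (1,17,3); (1,17,4); (1,17,5); (1,17,6); (1,17,7); (1,17,8); (1,17,9); (1,17,15); (1,17,16); (1,17,17); (1,17,18); (1,17,19); (1,17,21); (1,17,22); (1,17,23); (1,17,24); (1,18,1); (1,18,2); (1,18,3); (1,18,4); (1,18,5); (1,18,6); (1,18,7); (1,18,8); (1,18,10); (1,18,12); (1,18,13); (1,18,14); (1,18,19); (1,18,20); (1,18,21); (1,18,22); (1,18,24); (1,19,1); (1,19,2); (1,19,4); (1,19,5); (1,19,6); (1,19,8); (1,19,9); (1,19,10); (1,19,11); (1,19,12); (1,19,13); (1,19,14); (1,19,15); (1,19,16); (1,19,17); (1,19,18); (1,19,19); (1,19,22); (1,20,1); (1,20,2); (1,20,3); (1,20,4); (1,20,5); (1,20,7); (1,20,8); (1,20,9); (1,20,11); (1,20,12); (1,20,13);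 (1,20,16); (1,20,17); (1,20,18); (1,20,20); (1,20,22); (1,20,23); (1,20,24); (1,21,1); (1,21,2); (1,21,3); (1,21,4); (1,21,6); (1,21,7); (1,21,8); (1,21,9); (1,21,10); (1,21,11); (1,21,13); (1,21,15); (1,21,17); (1,21,18); (1,21,19); (1,21,20); (1,21,21); (1,21,23); (1,22,1); (1,22,2); (1,22,3); (1,22,4); (1,22,5); (1,22,11); (1,22,12); (1,22,13); (1,22,14); (1,22,15); (1,22,16); (1,22,17); (1,22,19); (1,22,20); (1,22,21); (1,22,22); (1,22,24); (1,23,1); (1,23,3); (1,23,4); (1,23,5); (1,23,6); (1,23,7); (1,23,9); (1,23,10); (1,23,11); (1,23,12); (1,23,14); (1,23,16); (1,23,18); (1,23,19); (1,23,20); (1,23,21); (1,23,22); (1,23,23); (1,24,2); (1,24,3); (1,24,4); (1,24,5); (1,24,6); (1,24,8); (1,24,9); (1,24,10); (1,24,12); (1,24,13); (1,24,14); (1,24,15); (1,24,16); (1,24,18); (1,24,19); (1,24,22); (1,24,23); (1,24,24)].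

Local Close Scope ring_scope.

Lemma arc_norm : all cnorm arc. Proof. vm_compute. reflexivity. Qed.
Lemma arc_uniq : uniq arc. Proof. vm_compute. reflexivity. Qed.
Lemma arc_size : size arc = 418. Proof. vm_compute. reflexivity. Qed.
Lemma arc_bound : allbound arc 18. Proof. vm_compute. reflexivity. Qed.
Lemma c0_norm : cnorm (1, 0, 1). Proof. vm_compute. reflexivity. Qed.
Lemma arc_ex : count (ztest^~ (1, 0, 1)) arc = 18. Proof. vm_compute. reflexivity. Qed.

Theorem mainTheorem12 (F : finFieldType) (hF : #|F| = 25) :
  (exists B : {set 'M[F]_3}, is_arc 418 18 B) /\ (418 <= m_r F 18)%N.
Proof.
have [w hw] := exists_w hF.
have H := arc_ok hF hw arc_norm arc_uniq arc_bound c0_norm arc_ex.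
rewrite arc_size in H.
have cB : #|Barc w arc| = 418 by rewrite (card_B hF hw arc_norm arc_uniq) arc_size.
split; first by exists (Barc w arc).
rewrite /m_r -[X in (X <= _)%N]cB.
apply: (@leq_bigmax_cond _ (fun B : {set 'M[F]_3} => is_arc #|B| 18 B) (fun B => #|B|)).
by rewrite cB.
Qed.
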